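(* For every mixed graph $G$ without directed cycles: $\Lambda(G)+1\le \mathrm{nd}_{\mathrm m}(G^+)$, $\Lambda(G)\le\mathrm{tw}(G^+)$, $\Lambda(G)\le 2^{\mathrm{td}(G)}-2$, and $\Lambda(G)\le 2\,\mathrm{vc}(G)$.
   Context: A mixed graph $G$ consists of a finite vertex set $V(G)$, a set $E(G)$ of undirected edges and a set $A(G)$ of directed arcs; it is simple and contains no directed cycle. The maxrank $\Lambda(G)$ is the number of arcs on a longest directed path. The transitive closure $G^+$ is obtained by adding every arc $(u,v)$ such that $G$ has a directed path from $u$ to $v$ and removing edges parallel to such arcs. $N^+(v)$, $N^-(v)$, $N^{\mathrm u}(v)$ are the out-, in- and undirected neighbors of $v$; $u,v$ have the same mixed type if $N^{\mathrm u}(u)\setminus\{v\}=N^{\mathrm u}(v)\setminus\{u\}$, $N^-(u)=N^-(v)$, $N^+(u)=N^+(v)$; the mixed neighborhood diversity $\mathrm{nd}_{\mathrm m}$ is the number of mixed types. $\mathrm{tw},\mathrm{td},\mathrm{vc}$ are treewidth, treedepth, vertex cover number of the underlying undirected graph (arcs replaced by edges); $\mathrm{tw}(G^+)$ refers to the underlying graph of $G^+$. *)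

(* Defs.v *)
From mathcomp Require Import all_boot.
Set Implicit Arguments.
Unset Strict Implicit.
Unset Printing Implicit Defensive.

Record mixed_graph (V : finType) := MixedGraph {
  medge : rel V;
  marc  : rel V
}.

Section MixedGraphs.
Variable V : finType.
Implicit Types (G : mixed_graph V).

Definition simple_mixed G : Prop :=
  [/\ symmetric (medge G), irreflexive (medge G), irreflexive (marc G),
      (forall u v, medge G u v -> ~~ marc G u v) &
      (forall u v, marc G u v -> ~~ marc G v u)].

Definition no_directed_cycle G : Prop :=
  forall x y, marc G x y -> ~~ connect (marc G) y x.

Definition has_dpath G (n : nat) : bool :=
  [exists x : V, exists s : n.-tuple V, path (marc G) x s && uniq (x :: s)].

(* Maxrank: number of arcs on a longest directed path
   (a path has at most #|V| vertices, hence fewer than #|V| arcs). *)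
Definition maxrank G : nat :=
  \max_(n < #|V|) (if has_dpath G n then (n : nat) else 0).

Definition reach G (u v : V) : bool :=
  [exists y, marc G u y && connect (marc G) y v].

Definition tclosure G : mixed_graph V :=
  MixedGraph [rel u v | medge G u v && ~~ reach G u v && ~~ reach G v u]
             [rel u v | reach G u v].

Definition Nu G (v : V) : {set V} := [set w | medge G v w].
Definition Nin G (v : V) : {set V} := [set w | marc G w v].
Definition Nout G (v : V) : {set V} := [set w | marc G v w].

Definition same_mixed_type G (u v : V) : bool :=
  [&& Nu G u :\ v == Nu G v :\ u, Nin G u == Nin G v & Nout G u == Nout G v].

Definition nd_m G : nat :=
  #|[set [set w | same_mixed_type G v w] | v : V]|.

Definition und G : rel V :=
  [rel u v | [|| medge G u v, marc G u v | marc G v u]].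

Definition vertex_cover (H : rel V) (C : {set V}) : bool :=
  [forall u, forall v, H u v ==> (u \in C) || (v \in C)].

Definition vc_num (H : rel V) : nat :=
  \big[minn/#|V|]_(C : {set V} | vertex_cover H C) #|C|.

(* A rooted forest on V given by a parent function. *)
Definition par_rel (f : {ffun V -> option V}) : rel V :=
  [rel x y | f x == Some y].

Definition ancestor (f : {ffun V -> option V}) (a v : V) : bool :=
  connect (par_rel f) v a.

Definition elim_forest (H : rel V) (f : {ffun V -> option V}) : bool :=
  [forall x, forall y, par_rel f x y ==> ~~ connect (par_rel f) y x] &&
  [forall u, forall v, H u v ==> ancestor f u v || ancestor f v u].

Definition forest_height (f : {ffun V -> option V}) : nat :=
  \max_(v : V) #|[set a | ancestor f a v]|.

Definition td_num (H : rel V) : nat :=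
  \big[minn/#|V|]_(f : {ffun V -> option V} | elim_forest H f) forest_height f.

Definition is_tree (m : nat) (T : rel 'I_m) : Prop :=
  [/\ 0 < m, symmetric T, irreflexive T,
      (forall i j, connect T i j) &
      #|[set p : 'I_m * 'I_m | T p.1 p.2]| = (m - 1).*2].

Definition tree_decomp (H : rel V) (m : nat) (T : rel 'I_m)
    (B : 'I_m -> {set V}) : Prop :=
  [/\ is_tree T,
      (forall v, exists i, v \in B i),
      (forall u v, H u v -> exists i, (u \in B i) && (v \in B i)) &
      (forall v i j, v \in B i -> v \in B j ->
         connect [rel a b | [&& T a b, v \in B a & v \in B b]] i j)].

Definition td_width (m : nat) (B : 'I_m -> {set V}) : nat :=
  (\max_(i < m) #|B i|) - 1.

Definition is_treewidth (H : rel V) (k : nat) : Prop :=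
  (exists m (T : rel 'I_m) (B : 'I_m -> {set V}),
      tree_decomp H T B /\ td_width B = k) /\
  (forall m (T : rel 'I_m) (B : 'I_m -> {set V}),
      tree_decomp H T B -> k <= td_width B).

End MixedGraphs.

(* Main.v *)
Require Import Defs.
From mathcomp Require Import all_boot zify.
Set Implicit Arguments. Unset Strict Implicit. Unset Printing Implicit Defensive.

Lemma leaf_shortcut (T: finType) (R : rel T) (l u : T) :
  (forall j, R l j -> j = u) -> (forall j, R j l -> j = u) ->
  forall i j, i != l -> j != l -> connect R i j ->
  connect [rel a b | [&& R a b, a != l & b != l]] i j.
Proof.
move=> Hl1 Hl2 i j il jl /connectP[p pp ej]; subst j.
move: jl.
elim: {p}(size p) {-2}p (leqnn (size p)) i il pp => [|n IH] [|y p] //= Hs i il.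
move=> /andP[Riy pyp] jl.
case: (eqVneq y l) => [yl | yl].
  subst y. have iu := Hl2 _ Riy. subst i.
  move: Hs pyp jl; case: p => [|z p] /=; first by rewrite eqxx.
  move=> Hs /andP[Rlz pzp] jl. have zu := Hl1 _ Rlz. subst z.
  apply: IH => //. by rewrite -ltnS ltnW.
apply: (connect_trans (y := y)).
  apply: connect1 => /=. by rewrite Riy il yl.
by apply: IH.
Qed.

Lemma card_edges (m : nat) (T : rel 'I_m) (U : {set 'I_m}) :
  #|[set p : 'I_m * 'I_m | [&& T p.1 p.2, p.1 \in U & p.2 \in U]]| =
  \sum_(i in U) #|[set j in U | T i j]|.
Proof.
rewrite -sum1_card.
rewrite (eq_bigl (fun p : 'I_m * 'I_m => (p.1 \in U) && ((p.2 \in U) && T p.1 p.2))); last first.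
  by move=> p; rewrite inE; case: (T _ _); case: (_ \in U); case: (_ \in U).
rewrite -(pair_big_dep (fun i => i \in U) (fun i j => (j \in U) && T i j) (fun _ _ => 1)) /=.
apply: eq_bigr => i iU. rewrite sum1_card. apply: eq_card => j; by rewrite inE.
Qed.

Definition TU m (T : rel 'I_m) (U : {set 'I_m}) : rel 'I_m :=
  [rel a b | [&& T a b, a \in U & b \in U]].
Definition Tv (V : finType) m (T : rel 'I_m) (B : 'I_m -> {set V}) (U : {set 'I_m}) v : rel 'I_m :=
  [rel a b | [&& T a b, a \in U, b \in U, v \in B a & v \in B b]].
Definition Eset m (T : rel 'I_m) (U : {set 'I_m}) :=
  [set p : 'I_m * 'I_m | [&& T p.1 p.2, p.1 \in U & p.2 \in U]].

Lemma helly (V : finType) m (T : rel 'I_m) (B : 'I_m -> {set V}) (K : {set V}) :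
 symmetric T -> irreflexive T ->
 forall n (U : {set 'I_m}), #|U| = n.+1 ->
 (forall i j, i \in U -> j \in U -> connect (TU T U) i j) ->
 #|Eset T U| <= n.*2 ->
 (forall x y, x \in K -> y \in K -> exists2 i, i \in U & (x \in B i) && (y \in B i)) ->
 (forall v i j, v \in K -> i \in U -> j \in U -> v \in B i -> v \in B j ->
    connect (Tv T B U v) i j) ->
 exists2 i, i \in U & K \subset B i.
Proof.
move=> Tsym Tirr; elim=> [|n IH] U cU Hconn Hedge Hcov Hsub.
  move/eqP: cU => /cards1P[i Ui]. exists i; first by rewrite Ui set11.
  apply/subsetP=> v vK. case: (Hcov v v vK vK) => j; rewrite Ui inE => /eqP-> /andP[]//.
have [l lU degl] : exists2 l, l \in U & #|[set j in U | T l j]| <= 1.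
  case: (boolP [exists l in U, #|[set j in U | T l j]| <= 1]) => [/exists_inP [l lU dl]|/exists_inPn H]; first by exists l.
  exfalso.
  have : \sum_(i in U) 2 <= \sum_(i in U) #|[set j in U | T i j]|.
    apply: leq_sum => i iU. by have := H i iU; rewrite -ltnNge.
  rewrite -card_edges sum_nat_const cU. move: Hedge; rewrite /Eset. lia.
have [j jU jl] : exists2 j, j \in U & j != l.
  have := cardsD1 l U; rewrite cU lU => /eqP; rewrite add1n eqSS => /eqP h.
  have : 0 < #|U :\ l| by rewrite -h.
  case/card_gt0P => j; rewrite !inE => /andP[jl jU]; by exists j.
have [u /andP[Tlu uU] Hu] : exists2 u, T l u && (u \in U) & forall k, k \in U -> T l k -> k = u.
  have := Hconn l j lU jU => /connectP[[|z p] /=].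
    by move=> _ jl'; rewrite jl' eqxx in jl.
  case/andP => /and3P[Tlz _ zU] _ _. exists z; first by rewrite Tlz zU.
  move=> k kU Tlk. move/card_le1_eqP: degl => h.
  apply: h; by rewrite inE ?kU ?zU.
have ul : u != l by apply: contraTneq Tlu => ->; rewrite Tirr.
have Hl2 : forall k, k \in U -> T k l -> k = u by move=> k kU Tkl; apply: Hu => //; rewrite Tsym.
case: (boolP [exists v in K, (v \in B l) && (v \notin B u)]).
  case/exists_inP => v vK /andP[vBl vBu]. exists l => //.
  apply/subsetP => y yK. case: (Hcov v y vK yK) => i iU /andP[vi yi].
  have := Hsub v l i vK lU iU vBl vi => /connectP[[|z p] /=].
    by move=> _ eil; subst i.
  case/andP => /and5P[Tlz _ zU _ vz] _ _. by rewrite (Hu z zU Tlz) (negbTE vBu) in vz.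
move/exists_inPn => Hlu.
have Hlu' : forall v, v \in K -> v \in B l -> v \in B u.
  move=> v vK vl. have := Hlu v vK. by rewrite vl /= negbK.
have [i iU2 KB] : exists2 i, i \in U :\ l & K \subset B i; last first.
  by move: iU2; rewrite inE => /andP[_ iU]; exists i.
apply: IH.
- have := cardsD1 l U; rewrite cU lU => /eqP; rewrite add1n eqSS => /eqP h. by rewrite -h.
- move=> a b; rewrite !inE => /andP[al aU] /andP[bl bU].
  have H1 : forall k, TU T U l k -> k = u by move=> k /and3P[Tlk _ kU]; apply: Hu.
  have H2 : forall k, TU T U k l -> k = u by move=> k /and3P[Tkl kU _]; apply: Hl2.
  apply: (connect_sub _ (leaf_shortcut H1 H2 al bl (Hconn a b aU bU))).
  move=> x y /= /and3P[/and3P[Txy xU yU] xl yl]. apply: connect1.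
  by rewrite /TU /= !inE Txy xU yU xl yl.
- have h1 : (l, u) \in Eset T U by rewrite /Eset inE /= Tlu lU uU.
  have h2 : (u, l) \in Eset T U :\ (l, u).
    by rewrite /Eset !inE /= Tsym Tlu lU uU andbT xpair_eqE negb_and ul.
  have h3 : Eset T (U :\ l) \subset (Eset T U :\ (l, u)) :\ (u, l).
    apply/subsetP => [[a b]]; rewrite /Eset !inE /= xpair_eqE => /and3P[Tab /andP[al aU] /andP[bl bU]].
    by rewrite Tab aU bU /= andbT xpair_eqE (negbTE bl) andbF /= (negbTE al).
  have := subset_leq_card h3. have := cardsD1 (l, u) (Eset T U). have := cardsD1 (u, l) (Eset T U :\ (l, u)).
  rewrite h1 h2. move: Hedge. rewrite /nat_of_bool -!muln2. move=> e1 e2 e3 e4; rewrite e3 e2 in e1; apply: (leq_trans e4); move: e1; rewrite !add1n mulSn. by rewrite addnC addn2 !ltnS.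
- move=> x y xK yK. case: (Hcov x y xK yK) => i iU /andP[xi yi].
  case: (eqVneq i l) => [il | il].
    subst i. exists u; first by rewrite !inE ul uU. by rewrite !Hlu'.
  by exists i; rewrite ?inE ?il ?iU ?xi ?yi.
- move=> v a b vK; rewrite !inE => /andP[al aU] /andP[bl bU] va vb.
  have H1 : forall k, Tv T B U v l k -> k = u by move=> k /and5P[Tlk _ kU _ _]; apply: Hu.
  have H2 : forall k, Tv T B U v k l -> k = u by move=> k /and5P[Tkl kU _ _ _]; apply: Hl2.
  apply: (connect_sub _ (leaf_shortcut H1 H2 al bl (Hsub v a b vK aU bU va vb))).
  move=> x y /= /and3P[/and5P[Txy xU yU vx vy] xl yl]. apply: connect1.
  by rewrite /Tv /= !inE Txy xU yU xl yl vx vy.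

Qed.
Lemma anc_cmp (V : finType) (f : {ffun V -> option V}) v a b :
  connect (par_rel f) v a -> connect (par_rel f) v b ->
  connect (par_rel f) a b || connect (par_rel f) b a.
Proof.
move=> /connectP[p pp ->] {a}; elim: p v pp => [|y p IH] v /=.
  by move=> _ ->.
move=> /andP[vy pyp] /connectP[[|z q] /=].
  move=> _ ->; apply/orP; right; apply/connectP; exists (y :: p) => //=; by rewrite vy.
move=> /andP[vz pzq] eb.
have zy : z = y by move: vy vz; rewrite /par_rel /= => /eqP -> /eqP [] ->.
subst z. apply: IH => //. rewrite eb; apply/connectP; by exists q.
Qed.

Definition apath (V : finType) (e : rel V) (q : seq V) :=
  if q is x :: s then path e x s else true.

Lemma apath_cat (V : finType) (e : rel V) q1 q2 :
  apath e (q1 ++ q2) -> apath e q1 && apath e q2.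
Proof.
case: q1 => [|x s1] //= ; rewrite cat_path => /andP[-> /=].
by case: q2 => //= y s2 /andP[].
Qed.

Definition Arel (V : finType) (f : {ffun V -> option V}) : rel V :=
  fun a b => ancestor f a b || ancestor f b a.

Lemma top_path (V : finType) (f : {ffun V -> option V}) x s :
  path (Arel f) x s -> exists2 r, r \in x :: s & forall y, y \in x :: s -> ancestor f r y.
Proof.
rewrite /ancestor.
elim: s x => [|y s IH] x /=.
  move=> _; exists x; first by rewrite inE.
  by move=> y; rewrite inE => /eqP->; exact: connect0.
move=> /andP[Axy pys]. case: (IH y pys) => r rin Hr.
have ry := Hr y (mem_head _ _).
rewrite /Arel /ancestor in Axy.
case/orP: Axy => [axy | ayx].
  case/orP: (anc_cmp axy ry) => [xr | rx].
    exists r; first by rewrite in_cons rin orbT.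
    move=> z; rewrite in_cons => /orP[/eqP-> | zin] //. exact: Hr.
  exists x; first by rewrite mem_head.
  move=> z; rewrite in_cons => /orP[/eqP-> | zin]; first exact: connect0.
  exact: connect_trans (Hr z zin) rx.
exists r; first by rewrite in_cons rin orbT.
move=> z; rewrite in_cons => /orP[/eqP-> | zin]; last exact: Hr.
exact: connect_trans ayx ry.
Qed.

Lemma td_path (V : finType) (f : {ffun V -> option V}) :
  forall q : seq V, apath (Arel f) q -> uniq q -> 0 < size q ->
  exists2 w, w \in q & size q < 2 ^ #|[set a | (a \in q) && ancestor f a w]|.
Proof.
move=> q; move: {2}(size q) (leqnn (size q)) => n.
elim: n q => [|n IH] q Hs ap uq q0; first by move: Hs q0; case: (size q).
have [r rin Hr] : exists2 r, r \in q & forall y, y \in q -> ancestor f r y.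
  by clear -ap q0; move: ap q0; case: q => [|x s] //= ap _; apply: top_path.
move: Hr Hs ap uq q0; case/splitPr: rin => q1 q2 Hr Hs ap uq _.
case/andP: (apath_cat ap) => ap1 ap2'.
have ap2 : apath (Arel f) q2 by move: ap2'; case: q2 {Hr Hs ap uq} => //= y s /andP[].
move: uq; rewrite cat_uniq /= => /and4P[uq1 /norP[rq1 _] rq2 uq2].
have key : forall qi, apath (Arel f) qi -> uniq qi -> r \notin qi ->
    {subset qi <= q1 ++ r :: q2} -> size q1 + size q2 <= (size qi).*2 ->
    size qi <= size q1 + size q2 ->
    exists2 w, w \in q1 ++ r :: q2 &
      size (q1 ++ r :: q2) < 2 ^ #|[set a | (a \in q1 ++ r :: q2) && ancestor f a w]|.
  move=> qi api uqi rqi sub Hsz Hsz2. rewrite size_cat /=.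
  case: (posnP (size qi)) => [qi0 | qpos].
    exists r; first by rewrite mem_cat mem_head orbT.
    have h1 : 0 < #|[set a | (a \in q1 ++ r :: q2) && ancestor f a r]|.
      apply/card_gt0P; exists r; rewrite inE mem_cat mem_head orbT /=; exact: connect0.
    have h2 : 2 ^ 1 <= 2 ^ #|[set a | (a \in q1 ++ r :: q2) && ancestor f a r]|.
      by rewrite leq_pexp2l.
    move: Hsz h2; rewrite qi0 double0 leqn0 addn_eq0 => /andP[/eqP-> /eqP->] /=.
    by apply: leq_trans.
  have Hsi : size qi <= n.
    move: Hs; rewrite size_cat /= addnS ltnS => h. exact: leq_trans Hsz2 h.
  have [w win Hw] := IH qi Hsi api uqi qpos.
  exists w; first exact: sub.
  set S' := [set a | (a \in qi) && ancestor f a w].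
  have sub2 : r |: S' \subset [set a | (a \in q1 ++ r :: q2) && ancestor f a w].
    apply/subsetP => a; rewrite !inE => /orP[/eqP-> | /andP[ai aw]].
      rewrite mem_cat mem_head orbT /=. apply: Hr; exact: sub.
    by rewrite sub // aw.
  have c1 : #|r |: S'| = #|S'|.+1 by rewrite cardsU1 inE (negbTE rqi).
  have := subset_leq_card sub2; rewrite c1 => hc.
  have := leq_pexp2l (isT : 0 < 2) hc. rewrite expnS.
  move: Hw Hsz. set P := 2 ^ #|S'|. set Q := 2 ^ _.
  rewrite -!muln2. set s1 := size q1. set s2 := size q2. set s3 := size qi. clearbody P Q s1 s2 s3. lia.
case: (leqP (size q2) (size q1)) => h.
  apply: (key q1 ap1 uq1 rq1).
  - by move=> a ai; rewrite mem_cat ai.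
  - by rewrite -addnn leq_add2l.
  - exact: leq_addr.
apply: (key q2 ap2 uq2 rq2).
- by move=> a ai; rewrite mem_cat in_cons ai !orbT.
- by rewrite -addnn leq_add2r ltnW.
- exact: leq_addl.
Qed.

Lemma path_reach (V : finType) (e : rel V) x s : path e x s -> forall u w,
  u \in x :: s -> w \in x :: s ->
  [|| u == w, [exists y, e u y && connect e y w] | [exists y, e w y && connect e y u]].
Proof.
elim: s x => [|y s IH] x /=.
  by move=> _ u w; rewrite !inE => /eqP-> /eqP->; rewrite eqxx.
move=> /andP[exy pys] u w.
have Hx: forall z, z \in y :: s -> [exists y0, e x y0 && connect e y0 z].
  move=> z hz; apply/existsP; exists y; rewrite exy /=; exact: (path_connect pys).
rewrite in_cons => /orP[/eqP-> | hu]; rewrite in_cons => /orP[/eqP-> | hw].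
- by rewrite eqxx.
- by rewrite Hx // orbT.
- by rewrite Hx // !orbT.
- exact: IH pys u w hu hw.
Qed.

Lemma maxrank_wit (V : finType) (G : mixed_graph V) : 0 < #|V| ->
  exists x, exists2 s : seq V, size s = maxrank G & path (marc G) x s && uniq (x :: s).
Proof.
move=> V0. have [x _] := card_gt0P V0.
have V0' : 0 < #|'I_#|V| | by rewrite card_ord.
case: (eq_bigmax (fun n : 'I_#|V| => if has_dpath G n then (n : nat) else 0) V0') => i0 /=.
rewrite /maxrank => ->.
case: ifP => [/existsP[y /existsP[s hs]] | _].
  by exists y; exists (val s); rewrite ?size_tuple.
by exists x; exists [::].
Qed.

Lemma same_refl (V : finType) (G : mixed_graph V) v : same_mixed_type G v v.
Proof. by rewrite /same_mixed_type !eqxx. Qed.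

Lemma reach_irr (V : finType) (G : mixed_graph V) v :
  no_directed_cycle G -> ~~ reach G v v.
Proof.
move=> ndc; apply/existsP => [[y /andP[vy yv]]].
by have := ndc _ _ vy; rewrite yv.
Qed.

Lemma cls_neq (V : finType) (G : mixed_graph V) a b :
  no_directed_cycle G -> reach G a b ->
  [set w | same_mixed_type (tclosure G) a w] <> [set w | same_mixed_type (tclosure G) b w].
Proof.
move=> ndc rab H.
have : a \in [set w | same_mixed_type (tclosure G) b w] by rewrite -H inE same_refl.
rewrite inE /same_mixed_type => /and3P[_ _ /eqP hout].
have : b \in Nout (tclosure G) a by rewrite inE /=.
by rewrite -hout inE /= (negbTE (reach_irr b ndc)).
Qed.

Lemma vc_path (V : finType) (e : rel V) (C : {set V}) :
  (forall u v, e u v -> (u \in C) || (v \in C)) ->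
  forall x s, path e x s -> size (x :: s) <= (count (mem C) (x :: s)).*2 + (x \notin C).
Proof.
move=> Hc x s; elim: s x => [|y s IH] x /=.
  by move=> _; case: (x \in C).
move=> /andP[exy pys]. have := IH y pys. move: (Hc _ _ exy) => /=.
case: (x \in C); case: (y \in C) => //=; lia.
Qed.

Theorem mainTheorem11 (V : finType) (G : mixed_graph V) :
  0 < #|V| -> simple_mixed G -> no_directed_cycle G ->
  [/\ maxrank G + 1 <= nd_m (tclosure G),
      (forall k, is_treewidth (und (tclosure G)) k -> maxrank G <= k),
      maxrank G <= 2 ^ td_num (und G) - 2 &
      maxrank G <= 2 * vc_num (und G)].
Proof.
move=> V0 _ ndc.
have [x [s sz /andP[ps us]]] := maxrank_wit G V0.
move: sz; set L := maxrank G => sz.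
set q := x :: s.
have szq : size q = L.+1 by rewrite /= sz.
have Lv : L < #|V| by rewrite -ltnS -szq -(card_uniqP us) ltnS max_card.
have pr := path_reach ps.
split.
- rewrite /nd_m.
  have inj : {in q &, injective (fun v => [set w | same_mixed_type (tclosure G) v w])}.
    move=> u w uq wq H. case/or3P: (pr u w uq wq) => [/eqP//| r | r]; exfalso.
      exact: (cls_neq ndc r H).
    exact: (cls_neq ndc r (esym H)).
  rewrite addn1 -szq -(card_uniqP us) -(card_in_imset inj).
  apply: subset_leq_card. apply/subsetP => c /imsetP[v _ ->].
  by apply/imsetP; exists v.
- move=> k [[m [T [B [[[m0 Tsym Tirr Tconn Tcnt] Hcov Hedge Hsub] wk]]]] _].
  have [i _ KB] : exists2 i : 'I_m, i \in setT & [set v in q] \subset B i.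
    apply: (helly Tsym Tirr (n := m.-1)).
    - by rewrite cardsT card_ord prednK.
    - move=> a b _ _.
      have eT : TU T setT =2 T by move=> a' b'; rewrite /TU /= !in_setT !andbT.
      by rewrite (eq_connect eT).
    - have -> : Eset T setT = [set p : 'I_m * 'I_m | T p.1 p.2].
        by apply/setP => p; rewrite !inE !andbT.
      by rewrite Tcnt subn1.
    - move=> a b; rewrite !inE => aq bq. case: (eqVneq a b) => [<-|ab].
        by case: (Hcov a) => i ai; exists i; rewrite ?in_setT ?ai.
      have : und (tclosure G) a b.
        case/or3P: (pr a b aq bq) => [/eqP e|r|r]; first by rewrite e eqxx in ab.
          by rewrite /und /= /reach r orbT.
        by rewrite /und /= /reach r !orbT.
      by case/Hedge => i abi; exists i; rewrite ?in_setT.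
    - move=> v a b _ _ _ va vb.
      have eT : Tv T B setT v =2 [rel a b | [&& T a b, v \in B a & v \in B b]].
        by move=> a' b'; rewrite /Tv /= !in_setT.
      rewrite (eq_connect eT). exact: Hsub.
  rewrite -wk /td_width.
  have := subset_leq_card KB. rewrite cardsE (card_uniqP us) szq => h.
  have hM := leq_bigmax (F := fun j : 'I_m => #|B j|) i.
  move: h hM. set a := #|B i|. set M := \max_(_ < _) _. clearbody a M. lia.
- rewrite /td_num. apply: (big_ind (fun h => L <= 2 ^ h - 2)).
  + have := ltn_expl #|V| (isT : 1 < 2). move: Lv. set P := 2 ^ _. set n := #|V|.
    clearbody P n. lia.
  + by move=> a b ha hb; rewrite /minn; case: ifP.
  + move=> f /andP[_ /forallP Hf].
    have pA : path (Arel f) x s.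
      apply: sub_path ps => a b ab. have := Hf a => /forallP /(_ b) /implyP; apply.
      by rewrite /und /= ab orbT.
    have [w wq Hw] := td_path (q := q) pA us isT.
    have h1 : #|[set a | (a \in q) && ancestor f a w]| <= forest_height f.
      apply: leq_trans (leq_bigmax (F := fun v => #|[set a | ancestor f a v]|) w).
      apply: subset_leq_card. apply/subsetP => a; rewrite !inE => /andP[]//.
    have := leq_pexp2l (isT : 0 < 2) h1. move: Hw; rewrite szq.
    set P := 2 ^ _. set Q := 2 ^ _. clearbody P Q. lia.
- rewrite /vc_num. apply: (big_ind (fun c => L <= 2 * c)).
  + move: Lv. set n := #|V|. clearbody n. lia.
  + by move=> a b ha hb; rewrite /minn; case: ifP.
  + move=> C /forallP HC.
    have Hc : forall u v, marc G u v -> (u \in C) || (v \in C).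
      move=> u v uv; have := HC u => /forallP /(_ v) /implyP; apply.
      by rewrite /und /= uv orbT.
    have h1 := vc_path Hc ps.
    have h2 : count (mem C) (x :: s) <= #|C|.
      rewrite -size_filter cardE. apply: uniq_leq_size; first exact: filter_uniq.
      by move=> a; rewrite mem_filter mem_enum => /andP[].
    move: h1 h2; rewrite -/q szq. set c := count _ _. set d := #|C|.
    clearbody c d. case: (x \in C) => /=; lia.
Qed.
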